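(* Let $V$ be a finite set with positive element weights ($\vert A \vert$ = total weight of $A \subseteq V$), let $\mathcal{P}, \mathcal{P}'$ be partitions of $V$ into nonempty parts, and let $P_i', P_j' \in \mathcal{P}'$ be distinct. Define $\phi^*_{i',j'} : 2^{\mathcal{P}} \to \mathbb{R}$ by $$\phi^*_{i',j'}(\mathcal{S}) := \vert U_{\mathcal{S}} \cap P_j' \vert + \vert P_i' \vert - \vert U_{\mathcal{S}} \cap P_i' \vert + \sum_{P' \in \mathcal{P}' \setminus \{P_i', P_j'\}} \vert P' \vert \operatorname{peak}\Big(\frac{\vert U_{\mathcal{S}} \cap P' \vert}{\vert P' \vert}\Big).$$ Then $\phi^*_{i',j'}$ is submodular, and it is not symmetric in general: there exist $V$, $\mathcal{P}$, $\mathcal{P}'$, $P_i'$, $P_j'$ and $\mathcal{S} \subseteq \mathcal{P}$ with $\phi^*_{i',j'}(\mathcal{S}) \ne \phi^*_{i',j'}(\mathcal{P} \setminus \mathcal{S})$.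
   Context: $U_{\mathcal{S}}$ denotes the union of the sets in $\mathcal{S}$; $\operatorname{peak}(x) = x$ for $x \le 1/2$ and $1-x$ for $x > 1/2$. A function $\Pi : 2^{\mathcal{P}} \to \mathbb{R}$ is submodular if $\Pi(\mathcal{S}_1 \cup \mathcal{S}_2) \le \Pi(\mathcal{S}_1) + \Pi(\mathcal{S}_2) - \Pi(\mathcal{S}_1 \cap \mathcal{S}_2)$ for all $\mathcal{S}_1, \mathcal{S}_2$, and symmetric if $\Pi(\mathcal{S}) = \Pi(\mathcal{P} \setminus \mathcal{S})$ for all $\mathcal{S}$. *)

(* Defs.v *)
From HB Require Import structures.
From mathcomp Require Import all_boot all_order all_algebra.
Set Implicit Arguments. Unset Strict Implicit. Unset Printing Implicit Defensive.
Import Order.TTheory GRing.Theory Num.Theory.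
Local Open Scope ring_scope.

Definition wt (R : realFieldType) (V : finType) (w : V -> R) (A : {set V}) : R :=
  \sum_(x in A) w x.

Definition peak (R : realFieldType) (x : R) : R :=
  if x <= 2^-1 then x else 1 - x.

Definition phi_star (R : realFieldType) (V : finType) (w : V -> R)
    (P' : {set {set V}}) (Pi Pj : {set V}) (S : {set {set V}}) : R :=
  wt w (cover S :&: Pj) + wt w Pi - wt w (cover S :&: Pi)
  + \sum_(Q in P' :\: [set Pi; Pj])
      wt w Q * peak (wt w (cover S :&: Q) / wt w Q).

Definition submodular_on (R : realFieldType) (V : finType) (P : {set {set V}})
    (Pi_fun : {set {set V}} -> R) : Prop :=
  forall S1 S2 : {set {set V}}, S1 \subset P -> S2 \subset P ->
    Pi_fun (S1 :|: S2) <= Pi_fun S1 + Pi_fun S2 - Pi_fun (S1 :&: S2).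

Definition symmetric_on (R : realFieldType) (V : finType) (P : {set {set V}})
    (Pi_fun : {set {set V}} -> R) : Prop :=
  forall S : {set {set V}}, S \subset P -> Pi_fun S = Pi_fun (P :\: S).

(* Main.v *)
Require Import Defs.
From HB Require Import structures.
From mathcomp Require Import all_boot all_order all_algebra.
From mathcomp Require Import lra.
Import Order.TTheory GRing.Theory Num.Theory.
Local Open Scope ring_scope.

Lemma peak_ineq (R : realFieldType) (u l a b : R) :
  u + l = a + b -> l <= a -> l <= b -> peak u + peak l <= peak a + peak b.
Proof.
move=> H1 H2 H3; rewrite /peak.
case: (lerP u 2^-1) => ?; case: (lerP l 2^-1) => ?;
case: (lerP a 2^-1) => ?; case: (lerP b 2^-1) => ?; lra.
Qed.

Lemma speak_ineq (R : realFieldType) (c u l a b : R) : 0 < c ->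
  u + l = a + b -> l <= a -> l <= b ->
  c * peak (u / c) + c * peak (l / c) <= c * peak (a / c) + c * peak (b / c).
Proof.
move=> c0 H1 H2 H3; rewrite -!mulrDr; apply: ler_wpM2l; first exact: ltW.
apply: peak_ineq.
- by rewrite -!mulrDl H1.
- by rewrite ler_pM2r ?invr_gt0.
- by rewrite ler_pM2r ?invr_gt0.
Qed.

Lemma wt_ge0 (R : realFieldType) (V : finType) (w : V -> R) A :
  (forall x, 0 < w x) -> 0 <= wt w A.
Proof. by move=> hw; apply: sumr_ge0 => x _; apply: ltW. Qed.

Lemma wt_gt0 (R : realFieldType) (V : finType) (w : V -> R) A :
  (forall x, 0 < w x) -> A != set0 -> 0 < wt w A.
Proof.
move=> hw /set0Pn [x xA]; rewrite /wt (bigD1 x) //=.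
by rewrite ltr_pwDl // sumr_ge0 // => y _; apply: ltW.
Qed.

Lemma wt_split (R : realFieldType) (V : finType) (w : V -> R) A B :
  wt w A = wt w (A :&: B) + wt w (A :\: B).
Proof. by rewrite /wt (big_setID B). Qed.

Lemma wt_mod (R : realFieldType) (V : finType) (w : V -> R) A B :
  wt w (A :|: B) + wt w (A :&: B) = wt w A + wt w B.
Proof.
rewrite (@wt_split _ _ w (A :|: B) A) setUK setDUl setDv set0U.
rewrite (@wt_split _ _ w B A) [B :&: A]setIC.
lra.
Qed.

Lemma wt_le (R : realFieldType) (V : finType) (w : V -> R) A B :
  (forall x, 0 < w x) -> wt w (A :&: B) <= wt w A.
Proof. by move=> hw; rewrite (@wt_split _ _ w A B) lerDl wt_ge0. Qed.

Lemma cover_I {V : finType} {P S1 S2 : {set {set V}}} :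
  trivIset P -> S1 \subset P -> S2 \subset P ->
  cover (S1 :&: S2) = cover S1 :&: cover S2.
Proof.
move=> /trivIsetP tP s1 s2; apply/setP => x; rewrite inE.
apply/idP/idP.
- case/bigcupP => A; rewrite inE => /andP [A1 A2] xA.
  by apply/andP; split; apply/bigcupP; exists A.
- case/andP => /bigcupP [A A1 xA] /bigcupP [B B2 xB].
  have AB : A = B.
    apply/eqP; apply: contraT => nAB.
    have := tP A B (subsetP s1 _ A1) (subsetP s2 _ B2) nAB.
    by move/disjointFr => /(_ x xA); rewrite xB.
  by subst B; apply/bigcupP; exists A => //; rewrite inE A1.
Qed.

Lemma IQ (V : finType) (X Y Q : {set V}) : X :&: Y :&: Q = (X :&: Q) :&: (Y :&: Q).
Proof. by rewrite setIACA setIid. Qed.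

Lemma sub_part (R : realFieldType) (V : finType) (w : V -> R) (P P' : {set {set V}}) (Pi Pj : {set V}) :
  (forall x, 0 < w x) ->
  partition P [set: V] -> partition P' [set: V] ->
  submodular_on P (phi_star w P' Pi Pj).
Proof.
move=> hw /and3P [_ tP _] /and3P [_ _ n0P'] S1 S2 s1 s2.
have CU : cover (S1 :|: S2) = cover S1 :|: cover S2 by rewrite /cover bigcup_setU.
rewrite /phi_star CU (cover_I tP s1 s2).
set X1 := cover S1; set X2 := cover S2.
have M Q : wt w ((X1 :|: X2) :&: Q) = wt w (X1 :&: Q) + wt w (X2 :&: Q) - wt w (X1 :&: X2 :&: Q).
  by rewrite setIUl IQ -wt_mod addrK.
have L1 Q : wt w (X1 :&: X2 :&: Q) <= wt w (X1 :&: Q).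
  by rewrite IQ wt_le.
have L2 Q : wt w (X1 :&: X2 :&: Q) <= wt w (X2 :&: Q).
  by rewrite IQ setIC wt_le.
have Hs : \sum_(Q in P' :\: [set Pi; Pj]) wt w Q * peak (wt w ((X1 :|: X2) :&: Q) / wt w Q)
   + \sum_(Q in P' :\: [set Pi; Pj]) wt w Q * peak (wt w (X1 :&: X2 :&: Q) / wt w Q)
   <= \sum_(Q in P' :\: [set Pi; Pj]) wt w Q * peak (wt w (X1 :&: Q) / wt w Q)
   + \sum_(Q in P' :\: [set Pi; Pj]) wt w Q * peak (wt w (X2 :&: Q) / wt w Q).
  rewrite -!big_split /=; apply: ler_sum => Q; rewrite inE => /andP [_ QP].
  apply: speak_ineq => //.
  - by apply: wt_gt0 => //; apply: contraNneq n0P' => <-.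
  - by rewrite M subrK.
have := M Pi; have := M Pj; have := L1 Pi; have := L2 Pi; lra.
Qed.

Lemma counter (R : realFieldType) :
  (exists (V : finType) (w : V -> R) (P P' : {set {set V}}) (Pi Pj : {set V}),
     (forall x, 0 < w x) /\
     partition P [set: V] /\ partition P' [set: V] /\
     Pi \in P' /\ Pj \in P' /\ Pi != Pj /\
     ~ symmetric_on P (phi_star w P' Pi Pj)).
Proof.
set T := [set true]; set F := [set false].
set P : {set {set bool}} := [set T; F].
have ne : T != F by apply/eqP => /setP /(_ true); rewrite !inE.
have neT : T != set0 by apply/eqP => /setP /(_ true); rewrite !inE.
have neF : F != set0 by apply/eqP => /setP /(_ false); rewrite !inE.
have hP : partition P [set: bool].
  apply/and3P; split.
  - apply/eqP/setP => b; rewrite inE; apply/bigcupP.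
    case: b; [exists T | exists F]; rewrite ?inE ?eqxx ?orbT //.
  - apply/trivIsetP => A B; rewrite !inE => /orP[]/eqP-> /orP[]/eqP->;
      rewrite ?eqxx // => _; rewrite disjoints1 inE //.
  - by rewrite !inE eq_sym (negbTE neT) eq_sym (negbTE neF).
exists bool, (fun _ => 1), P, P, T, F.
do 6?split => //; first by rewrite !inE eqxx.
- by rewrite !inE eqxx orbT.
move=> /(_ [set T]).
have -> : P :\: [set T] = [set F].
  apply/setP => X; rewrite !inE; case: (X =P T) => [->|] //=.
  by apply/esym/negbTE.
rewrite /phi_star.
have -> : P :\: [set T; F] = set0.
  by apply/setP => X; rewrite !inE andNb.
rewrite !big_set0 !addr0.
have -> : cover [set T] = T by rewrite /cover big_set1.
have -> : cover [set F] = F by rewrite /cover big_set1.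
rewrite !setIid.
have -> : T :&: F = set0 by apply/setP => b; rewrite !inE; case: b.
have -> : F :&: T = set0 by apply/setP => b; rewrite !inE; case: b.
rewrite /wt !big_set0 !big_set1 => H.
have : [set T] \subset P by rewrite sub1set !inE eqxx.
move=> /H /eqP; lra.
Qed.

Theorem proposition10 (R : realFieldType) :
  (forall (V : finType) (w : V -> R) (P P' : {set {set V}}) (Pi Pj : {set V}),
     (forall x, 0 < w x) ->
     partition P [set: V] -> partition P' [set: V] ->
     Pi \in P' -> Pj \in P' -> Pi != Pj ->
     submodular_on P (phi_star w P' Pi Pj))
  /\
  (exists (V : finType) (w : V -> R) (P P' : {set {set V}}) (Pi Pj : {set V}),
     (forall x, 0 < w x) /\
     partition P [set: V] /\ partition P' [set: V] /\
     Pi \in P' /\ Pj \in P' /\ Pi != Pj /\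
     ~ symmetric_on P (phi_star w P' Pi Pj)).
Proof.
split; last exact: counter.
by move=> V w P P' Pi Pj hw hP hP' _ _ _; apply: sub_part.
Qed.
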